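(* Let $G$ and $H$ be connected graphs of order at least two. If $\Delta(G_{\rm SR})\ge 2$ or $\Delta(H_{\rm SR})\ge 2$, then $O_{\rm SR}(G\,\square\, H)=\mathcal{B}$.
   Context: All graphs are finite, simple and undirected; $d(x,y)$ is the shortest-path distance and $\Delta$ denotes maximum degree. The Cartesian product $G\,\square\,H$ has vertex set $V(G)\times V(H)$, with $(u,w)$ adjacent to $(u',w')$ iff either $u=u'$ and $ww'\in E(H)$, or $w=w'$ and $uu'\in E(G)$. A set $S\subseteq V(X)$ is a strong resolving set of a connected graph $X$ if for all distinct $x,y\in V(X)$ there exists $z\in S$ such that $x$ lies on a $y$–$z$ geodesic or $y$ lies on an $x$–$z$ geodesic. A vertex $u$ is maximally distant from $v$ if $d(u,v)\ge d(w,v)$ for every neighbor $w$ of $u$; $u,v$ are mutually maximally distant (MMD) if each is maximally distant from the other. The strong resolving graph $X_{\rm SR}$ has vertex set $\{x: x\text{ is MMD with some }y\}$ and edges exactly the MMD pairs. The Maker–Breaker strong resolving game on $X$: Maker and Breaker alternately select a not-yet-chosen vertex of $X$; Maker wins if the vertices he selects contain a strong resolving set of $X$, Breaker wins otherwise. In the M-game Maker moves first, in the B-game Breaker moves first. $O_{\rm SR}(X)=\mathcal{M}$ if Maker has a winning strategy in both games, $\mathcal{B}$ if Breaker has a winning strategy in both, and $\mathcal{N}$ if the first player has a winning strategy in each. *)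

(* Defs.v *)
From mathcomp Require Import all_boot.
Set Implicit Arguments. Unset Strict Implicit. Unset Printing Implicit Defensive.

Section Graphs.
Variable T : finType.
Variable e : rel T.

Definition simple_graph : Prop := symmetric e /\ irreflexive e.
Definition connected_graph : Prop := forall x y : T, connect e x y.

Fixpoint ball (x : T) (n : nat) : {set T} :=
  match n with
  | 0 => [set x]
  | n'.+1 => ball x n' :|: [set z | [exists w in ball x n', e w z]]
  end.

(* shortest-path distance (correct for connected graphs, where it is < #|T|) *)
Definition dist (x y : T) : nat := find (fun n => y \in ball x n) (iota 0 #|T|).

Definition on_geodesic (x y z : T) : bool := dist y x + dist x z == dist y z.

Definition strong_resolving (S : {set T}) : Prop :=
  forall x y : T, x != y ->
    exists2 z, z \in S & on_geodesic x y z || on_geodesic y x z.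

Definition max_distant (u v : T) : bool :=
  [forall w, e u w ==> (dist w v <= dist u v)].
Definition mmd (u v : T) : bool := max_distant u v && max_distant v u.

(* strong resolving graph: edges are the MMD pairs (simple graph, no loops) *)
Definition SR_edge (x y : T) : bool := (x != y) && mmd x y.
Definition SR_vertex (x : T) : bool := [exists y, mmd x y].
Definition SR_deg (x : T) : nat := #|[set y | SR_edge x y]|.
Definition Delta_SR : nat := \max_(x | SR_vertex x) SR_deg x.

(* Maker-Breaker strong resolving game.  State: Maker's set M, Breaker's set
   B, whose turn (true = Maker).  k is a fuel bounding the remaining moves. *)
Definition maker_final (M : {set T}) : Prop :=
  exists S : {set T}, S \subset M /\ strong_resolving S.

Fixpoint breaker_wins (k : nat) (M B : {set T}) (maker_turn : bool) : Prop :=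
  match k with
  | 0 => ~ maker_final M
  | k'.+1 =>
    if ~~ [exists v, v \notin M :|: B] then ~ maker_final M
    else if maker_turn then
      forall v, v \notin M :|: B -> breaker_wins k' (v |: M) B false
    else
      exists2 v, v \notin M :|: B & breaker_wins k' M (v |: B) true
  end.

(* Breaker has a winning strategy in the M-game and in the B-game *)
Definition OSR_is_B : Prop :=
  breaker_wins #|T| set0 set0 true /\ breaker_wins #|T| set0 set0 false.
End Graphs.

Definition cart_rel (T1 T2 : finType) (e1 : rel T1) (e2 : rel T2) : rel (T1 * T2) :=
  fun p q => ((p.1 == q.1) && e2 p.2 q.2) || ((p.2 == q.2) && e1 p.1 q.1).

(* Main.v *)
Require Import Defs.
From mathcomp Require Import all_boot zify.
Set Implicit Arguments. Unset Strict Implicit. Unset Printing Implicit Defensive.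

Section Dist.
Variables (T : finType) (e : rel T).

Lemma ballSE x n z : (z \in ball e x n.+1) = (z \in ball e x n) || [exists w in ball e x n, e w z].
Proof. by rewrite /= !inE. Qed.

Lemma ball0 x y : (y \in ball e x 0) = (y == x).
Proof. by rewrite /= inE. Qed.

Lemma ballS x n y : y \in ball e x n -> y \in ball e x n.+1.
Proof. by rewrite ballSE => ->. Qed.

Lemma ball_mono x n m y : n <= m -> y \in ball e x n -> y \in ball e x m.
Proof.
elim: m => [|m IH]; first by rewrite leqn0 => /eqP ->.
rewrite leq_eqVlt => /orP [/eqP -> //|]; rewrite ltnS => H /(IH H); exact: ballS.
Qed.

Lemma ball_edge x y : e x y -> y \in ball e x 1.
Proof. move=> H; rewrite ballSE; apply/orP; right; apply/existsP; exists x; by rewrite ball0 eqxx. Qed.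

Lemma ball_trans x y z n m : y \in ball e x n -> z \in ball e y m -> z \in ball e x (n + m).
Proof.
move=> Hy; elim: m z => [|m IH] z; first by rewrite ball0 addn0 => /eqP ->.
rewrite ballSE addnS => /orP [/IH /ballS //|/existsP [w /andP [Hw Hwz]]].
rewrite ballSE; apply/orP; right; apply/existsP; exists w; by rewrite IH.
Qed.

Lemma dist_le x y n : y \in ball e x n -> dist e x y <= n.
Proof.
move=> H; rewrite /dist; case: (ltnP n #|T|) => Hn.
  rewrite leqNgt; apply/negP => /(before_find 0); by rewrite nth_iota // H.
by apply: leq_trans (find_size _ _) _; rewrite size_iota.
Qed.

Lemma dist_ball_lt x y n : y \in ball e x n -> n < #|T| -> y \in ball e x (dist e x y).
Proof.
move=> H Hn.
have Hh : has (fun n => y \in ball e x n) (iota 0 #|T|).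
  by apply/hasP; exists n => //; rewrite mem_iota.
have := nth_find 0 Hh; rewrite nth_iota; first by [].
by move: Hh; rewrite has_find size_iota.
Qed.

Hypothesis esym : symmetric e.
Hypothesis reach : forall x y, exists2 n, n < #|T| & y \in ball e x n.

Lemma dist_ball x y : y \in ball e x (dist e x y).
Proof. by have [n Hn Hy] := reach x y; apply: dist_ball_lt Hy Hn. Qed.

Lemma dist_lt x y : dist e x y < #|T|.
Proof. have [n Hn Hy] := reach x y; exact: leq_ltn_trans (dist_le Hy) Hn. Qed.

Lemma ball_sym x y n : y \in ball e x n -> x \in ball e y n.
Proof.
elim: n x y => [|n IH] x y; first by rewrite !ball0 eq_sym.
rewrite ballSE => /orP [/IH /ballS //|/existsP [w /andP [Hw Hwz]]].
have H1 : w \in ball e y 1 by apply: ball_edge; rewrite esym.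
by have := ball_trans H1 (IH _ _ Hw).
Qed.

Lemma distC x y : dist e x y = dist e y x.
Proof.
by apply/eqP; rewrite eqn_leq !dist_le // ball_sym // dist_ball.
Qed.

Lemma dist_tri x y z : dist e x z <= dist e x y + dist e y z.
Proof. apply: dist_le; apply: ball_trans; exact: dist_ball. Qed.

Lemma dist_xx x : dist e x x = 0.
Proof. by apply/eqP; rewrite -leqn0 dist_le // ball0. Qed.

Lemma dist0 x y : dist e x y = 0 -> x = y.
Proof. move=> H; have := dist_ball x y; rewrite H ball0 => /eqP ->. done. Qed.

Lemma dist_edge x u w : e u w -> dist e x w <= (dist e x u).+1.
Proof.
move=> H; apply: leq_trans (dist_tri x u w) _; rewrite -addn1 leq_add2l.
exact: dist_le (ball_edge H).
Qed.

Lemma dist_step u z m : dist e u z = m.+1 -> exists2 w, e u w & dist e w z = m.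
Proof.
rewrite distC => H; have := dist_ball z u; rewrite H ballSE => /orP [/dist_le|].
  by rewrite H ltnn.
move=> /existsP [w /andP [Hw Hwu]]; exists w; first by rewrite esym.
apply/eqP; rewrite distC eqn_leq dist_le //=.
by have := dist_edge z Hwu; rewrite H ltnS.
Qed.

Lemma geo_max u v z : on_geodesic e u v z -> max_distant e u v -> u = z.
Proof.
move=> /eqP Hg /forallP Hm.
case Huz: (dist e u z) => [|m]; first exact: dist0.
have [w Huw Hwz] := dist_step Huz.
have := Hm w; rewrite Huw /= => Hw.
have := dist_tri v w z; rewrite -Hg Hwz Huz (distC v w) (distC v u); lia.
Qed.

Lemma mmd_block u v S : mmd e u v -> strong_resolving e S -> u != v -> u \in S \/ v \in S.
Proof.
move=> /andP [Huv Hvu] HS Hne; have [z Hz /orP [H|H]] := HS u v Hne.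
  by left; rewrite (geo_max H Huv).
by right; rewrite (geo_max H Hvu).
Qed.

Lemma diam_pair : 2 <= #|T| -> exists h, exists h', (h != h') && mmd e h h'.
Proof.
move=> /card_gt1P [x0 [y0 [_ _ Hxy]]].
have [p _ Hp] := @arg_maxnP _ (x0, y0) xpredT (fun p => dist e p.1 p.2) isT.
exists p.1, p.2.
have Hpos : 0 < dist e p.1 p.2.
  have := Hp (x0, y0) isT => /=; case H0: (dist e x0 y0) => [|k].
    by move/dist0: H0 => H0; rewrite H0 eqxx in Hxy.
  move=> H1; exact: leq_trans H1.
apply/andP; split.
  by apply/negP => /eqP Heq; rewrite Heq dist_xx in Hpos.
apply/andP; split; apply/forallP => w; apply/implyP => _.
  exact: (Hp (w, p.2) isT).
rewrite (distC p.2); exact: (Hp (w, p.1) isT).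
Qed.

End Dist.

Section Prod.
Variables (T1 T2 : finType) (e1 : rel T1) (e2 : rel T2).
Hypothesis s1 : symmetric e1.
Hypothesis s2 : symmetric e2.
Hypothesis r1 : forall x y, exists2 n, n < #|T1| & y \in ball e1 x n.
Hypothesis r2 : forall x y, exists2 n, n < #|T2| & y \in ball e2 x n.
Local Notation P := (cart_rel e1 e2).

Lemma symP : symmetric P.
Proof. move=> [a b] [c d]; by rewrite /cart_rel /= s1 s2 (eq_sym a) (eq_sym b). Qed.

Lemma lift1 a c y i : c \in ball e1 a i -> (c, y) \in ball P (a, y) i.
Proof.
elim: i c => [|i IH] c; first by rewrite !ball0 => /eqP ->.
rewrite ballSE => /orP [/IH /ballS //|/existsP [w /andP [Hw Hwc]]].
rewrite ballSE; apply/orP; right; apply/existsP; exists (w, y).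
by rewrite IH //= /cart_rel /= eqxx Hwc orbT.
Qed.

Lemma lift2 b d x i : d \in ball e2 b i -> (x, d) \in ball P (x, b) i.
Proof.
elim: i d => [|i IH] d; first by rewrite !ball0 => /eqP ->.
rewrite ballSE => /orP [/IH /ballS //|/existsP [w /andP [Hw Hwc]]].
rewrite ballSE; apply/orP; right; apply/existsP; exists (x, w).
by rewrite IH //= /cart_rel /= eqxx Hwc.
Qed.

Lemma ballP_dist a b n : forall c d, (c, d) \in ball P (a, b) n -> dist e1 a c + dist e2 b d <= n.
Proof.
elim: n => [|n IH] c d.
  by rewrite ball0 xpair_eqE => /andP [/eqP -> /eqP ->]; rewrite !dist_xx.
rewrite ballSE => /orP [/IH H|/existsP [[w1 w2] /andP [Hw]]]; first exact: leqW.
have := IH _ _ Hw; rewrite /cart_rel /= => H.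
case/orP => /andP [/eqP <- He].
  have := dist_edge r2 b He; lia.
have := dist_edge r1 a He; lia.
Qed.

Lemma in_ballP a b c d : (c, d) \in ball P (a, b) (dist e1 a c + dist e2 b d).
Proof.
apply: ball_trans (lift1 _ (dist_ball r1 a c)) (lift2 _ (dist_ball r2 b d)).
Qed.

Lemma card_ge1 (T : finType) (x : T) : 0 < #|T|.
Proof. by apply/card_gt0P; exists x. Qed.

Lemma rP : forall x y, exists2 n, n < #|{: T1 * T2}| & y \in ball P x n.
Proof.
move=> [a b] [c d]; exists (dist e1 a c + dist e2 b d); last exact: in_ballP.
rewrite card_prod; have := dist_lt r1 a c; have := dist_lt r2 b d.
have := card_ge1 a; have := card_ge1 b; nia.
Qed.

Lemma distP p q : dist P p q = dist e1 p.1 q.1 + dist e2 p.2 q.2.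
Proof.
case: p q => [a b] [c d] /=; apply/eqP; rewrite eqn_leq.
by rewrite dist_le ?in_ballP //= ballP_dist // dist_ball //; exact: rP.
Qed.

Lemma mmdP g g' h h' : mmd e1 g g' -> mmd e2 h h' -> mmd P (g, h) (g', h').
Proof.
move=> /andP [/forallP G1 /forallP G2] /andP [/forallP H1 /forallP H2].
apply/andP; split; apply/forallP => [[w1 w2]]; apply/implyP;
  rewrite /cart_rel !distP /= => /orP [] /andP [/eqP <- He].
- by have := implyP (H1 w2) He; rewrite leq_add2l.
- by have := implyP (G1 w1) He; rewrite leq_add2r.
- by have := implyP (H2 w2) He; rewrite leq_add2l.
- by have := implyP (G2 w1) He; rewrite leq_add2r.
Qed.

End Prod.

Lemma disjP (T : finType) (A B : {set T}) :
  reflect (forall x, x \in A -> x \in B -> False) [disjoint A & B].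
Proof.
rewrite -setI_eq0; apply: (iffP eqP) => [H x xA xB | H].
  have : x \in A :&: B by rewrite inE xA xB.
  by rewrite H inE.
apply/setP => x; rewrite !inE; apply/negP => /andP [] /H H1 /H1; done.
Qed.

Lemma disjointsU1 (T : finType) (x : T) (M B : {set T}) :
  [disjoint x |: M & B] = (x \notin B) && [disjoint M & B].
Proof.
apply/disjP/andP => [H|[H1 /disjP H2] y].
  split; first by apply/negP; apply: H; rewrite !inE eqxx.
  by apply/disjP => y yM; apply: H; rewrite !inE yM orbT.
by rewrite !inE => /orP [/eqP ->|/H2]; [move=> yB; rewrite yB in H1|].
Qed.

Lemma disj0 (T : finType) (B : {set T}) : [disjoint set0 & B].
Proof. by apply/disjP => x; rewrite inE. Qed.

Section Game.
Variables (T : finType) (e : rel T).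
Definition blocks (u v : T) := forall S, strong_resolving e S -> u \in S \/ v \in S.

Definition won (M B : {set T}) :=
  [disjoint M & B] /\ exists u, exists v, [/\ u \in B, v \in B & blocks u v].

Lemma won_notfinal M B : won M B -> ~ maker_final e M.
Proof.
move=> [Hd [u [v [Hu Hv Hb]]]] [S [HSM HS]].
have Hn : forall x, x \in M -> x \in B -> False.
  by move=> x xM xB; have := disjointFr Hd xM; rewrite xB.
by case: (Hb S HS) => /(subsetP HSM) H; [apply: (Hn u) | apply: (Hn v)].
Qed.

Lemma won_wins k M B t : won M B -> breaker_wins e k M B t.
Proof.
elim: k M B t => [|k IH] M B t Hw /=; first exact: won_notfinal Hw.
case: ifP => Hfree; first exact: won_notfinal Hw.
have [Hd [u [v [Hu Hv Hb]]]] := Hw.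
case: t.
  move=> x; rewrite inE negb_or => /andP [HvM HvB]; apply: IH; split => //.
    by rewrite disjointsU1 HvB.
  by exists u, v.
move/negbFE: Hfree => /existsP [x Hx]; exists x => //; apply: IH; split.
  rewrite disjoint_sym disjointsU1 disjoint_sym Hd andbT.
  by move: Hx; rewrite inE negb_or => /andP [].
by exists u, v; rewrite !inE Hu Hv !orbT.
Qed.

Variables (a a1 a2 : T).
Hypothesis Hab1 : blocks a a1.
Hypothesis Hab2 : blocks a a2.
Hypothesis Ha12 : a1 != a2.

Lemma S1 k (M B : {set T}) : 0 < k -> a \in B -> [disjoint M & B] ->
  (a1 \notin M :|: B) || (a2 \notin M :|: B) -> breaker_wins e k M B false.
Proof.
case: k => // k _ HaB Hd Hfree /=.
have Hex : [exists v, v \notin M :|: B].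
  by case/orP: Hfree => H; apply/existsP; [exists a1|exists a2].
rewrite Hex /=.
case/orP: Hfree => H; [exists a1 | exists a2] => //; apply: won_wins; split;
  (try by move: H; rewrite inE negb_or => /andP [H1 H2];
     rewrite disjoint_sym disjointsU1 disjoint_sym Hd andbT);
  [exists a, a1 | exists a, a2]; by rewrite !inE HaB eqxx orbT.
Qed.

Lemma S2 k (M B : {set T}) : 1 < k -> a \in B -> [disjoint M & B] ->
  a1 \notin M :|: B -> a2 \notin M :|: B -> breaker_wins e k M B true.
Proof.
case: k => // k Hk HaB Hd H1 H2 /=.
have Hex : [exists v, v \notin M :|: B] by apply/existsP; exists a1.
rewrite Hex /= => v; rewrite inE negb_or => /andP [HvM HvB].
apply: S1 => //; first by rewrite disjointsU1 HvB.
case: (eqVneq v a1) => [->|Hv1].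
  apply/orP; right; move: H2; rewrite !inE !negb_or => /andP [-> ->].
  by rewrite eq_sym Ha12.
apply/orP; left; move: H1; rewrite !inE !negb_or => /andP [-> ->].
by rewrite eq_sym Hv1.
Qed.
End Game.

Lemma stepM (T : finType) (e : rel T) k (M B : {set T}) v0 : v0 \notin M :|: B ->
  (forall v, v \notin M :|: B -> breaker_wins e k (v |: M) B false) ->
  breaker_wins e k.+1 M B true.
Proof.
move=> H0 H /=; have -> : [exists v, v \notin M :|: B] by apply/existsP; exists v0.
exact: H.
Qed.

Lemma stepB (T : finType) (e : rel T) k (M B : {set T}) v : v \notin M :|: B ->
  breaker_wins e k M (v |: B) true ->
  breaker_wins e k.+1 M B false.
Proof.
move=> H0 H /=; have -> : [exists v, v \notin M :|: B] by apply/existsP; exists v.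
by exists v.
Qed.

Lemma game (T : finType) (e : rel T) (a a1 a2 b b1 b2 : T) :
  uniq [:: a; a1; a2; b; b1; b2] ->
  blocks e a a1 -> blocks e a a2 -> blocks e b b1 -> blocks e b b2 ->
  OSR_is_B e.
Proof.
move=> /= Hu Ha1 Ha2 Hb1 Hb2.
have H4 : 4 <= #|T|.
  have : #|[:: a; a1; a2; b]| = 4.
    apply/card_uniqP; move: Hu; rewrite /= !inE !negb_or; move=> /and5P [].
    move=> /and5P [-> -> -> _ _] /and4P [-> -> _ _] /and3P [-> _ _] _ _.
    by [].
  by move=> <-; apply: max_card.
move: Hu; rewrite /= !inE !negb_or => /and5P [] /and5P [aa1 aa2 ab ab1 ab2]
  /and4P [a1a2 a1b a1b1 a1b2] /and3P [a2b a2b1 a2b2] /andP [bb1 bb2] /andP [b1b2 _].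
have aa1F := negbTE aa1; have aa1G := negbTE aa1; rewrite eq_sym in aa1G.
have aa2F := negbTE aa2; have aa2G := negbTE aa2; rewrite eq_sym in aa2G.
have abF := negbTE ab; have abG := negbTE ab; rewrite eq_sym in abG.
have ab1F := negbTE ab1; have ab1G := negbTE ab1; rewrite eq_sym in ab1G.
have ab2F := negbTE ab2; have ab2G := negbTE ab2; rewrite eq_sym in ab2G.
have a1a2F := negbTE a1a2; have a1a2G := negbTE a1a2; rewrite eq_sym in a1a2G.
have a1bF := negbTE a1b; have a1bG := negbTE a1b; rewrite eq_sym in a1bG.
have a1b1F := negbTE a1b1; have a1b1G := negbTE a1b1; rewrite eq_sym in a1b1G.
have a1b2F := negbTE a1b2; have a1b2G := negbTE a1b2; rewrite eq_sym in a1b2G.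
have a2bF := negbTE a2b; have a2bG := negbTE a2b; rewrite eq_sym in a2bG.
have a2b1F := negbTE a2b1; have a2b1G := negbTE a2b1; rewrite eq_sym in a2b1G.
have a2b2F := negbTE a2b2; have a2b2G := negbTE a2b2; rewrite eq_sym in a2b2G.
have bb1F := negbTE bb1; have bb1G := negbTE bb1; rewrite eq_sym in bb1G.
have bb2F := negbTE bb2; have bb2G := negbTE bb2; rewrite eq_sym in bb2G.
have b1b2F := negbTE b1b2; have b1b2G := negbTE b1b2; rewrite eq_sym in b1b2G.
split.
  case Hc: #|T| H4 => [|k] // H4.
  apply: (stepM (v0 := a)); first by rewrite !inE.
  move=> x _.
  case: k Hc H4 => [|k] Hc H4 //.
  case: (boolP (x \in [:: a; a1; a2])) => Hx.
    apply: (stepB (v := b)).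
      by move: Hx; rewrite !inE; case/or3P => /eqP ->; rewrite ?inE ?aa1F ?aa1G ?aa2F ?aa2G ?abF ?abG ?ab1F ?ab1G ?ab2F ?ab2G ?a1a2F ?a1a2G ?a1bF ?a1bG ?a1b1F ?a1b1G ?a1b2F ?a1b2G ?a2bF ?a2bG ?a2b1F ?a2b1G ?a2b2F ?a2b2G ?bb1F ?bb1G ?bb2F ?bb2G ?b1b2F ?b1b2G.
    apply: (@S2 T e b b1 b2 Hb1 Hb2 b1b2); first by clear -H4; lia.
    - by rewrite !inE eqxx.
    - by rewrite disjointsU1 disj0 andbT; move: Hx; rewrite !inE; case/or3P => /eqP ->; rewrite ?inE ?aa1F ?aa1G ?aa2F ?aa2G ?abF ?abG ?ab1F ?ab1G ?ab2F ?ab2G ?a1a2F ?a1a2G ?a1bF ?a1bG ?a1b1F ?a1b1G ?a1b2F ?a1b2G ?a2bF ?a2bG ?a2b1F ?a2b1G ?a2b2F ?a2b2G ?bb1F ?bb1G ?bb2F ?bb2G ?b1b2F ?b1b2G.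
    - by move: Hx; rewrite !inE; case/or3P => /eqP ->; rewrite ?inE ?aa1F ?aa1G ?aa2F ?aa2G ?abF ?abG ?ab1F ?ab1G ?ab2F ?ab2G ?a1a2F ?a1a2G ?a1bF ?a1bG ?a1b1F ?a1b1G ?a1b2F ?a1b2G ?a2bF ?a2bG ?a2b1F ?a2b1G ?a2b2F ?a2b2G ?bb1F ?bb1G ?bb2F ?bb2G ?b1b2F ?b1b2G.
    - by move: Hx; rewrite !inE; case/or3P => /eqP ->; rewrite ?inE ?aa1F ?aa1G ?aa2F ?aa2G ?abF ?abG ?ab1F ?ab1G ?ab2F ?ab2G ?a1a2F ?a1a2G ?a1bF ?a1bG ?a1b1F ?a1b1G ?a1b2F ?a1b2G ?a2bF ?a2bG ?a2b1F ?a2b1G ?a2b2F ?a2b2G ?bb1F ?bb1G ?bb2F ?bb2G ?b1b2F ?b1b2G.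
  move: Hx; rewrite !inE !negb_or => /and3P [xa xa1 xa2].
  have xaF := negbTE xa; have xa1F := negbTE xa1; have xa2F := negbTE xa2.
  have xaG := negbTE xa; have xa1G := negbTE xa1; have xa2G := negbTE xa2.
  rewrite eq_sym in xaG; rewrite eq_sym in xa1G; rewrite eq_sym in xa2G.
  apply: (stepB (v := a)).
    by rewrite ?inE ?aa1F ?aa1G ?aa2F ?aa2G ?abF ?abG ?ab1F ?ab1G ?ab2F ?ab2G ?a1a2F ?a1a2G ?a1bF ?a1bG ?a1b1F ?a1b1G ?a1b2F ?a1b2G ?a2bF ?a2bG ?a2b1F ?a2b1G ?a2b2F ?a2b2G ?bb1F ?bb1G ?bb2F ?bb2G ?b1b2F ?b1b2G ?xaF ?xaG ?xa1F ?xa1G ?xa2F ?xa2G.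
  apply: (@S2 T e a a1 a2 Ha1 Ha2 a1a2); first by clear -H4; lia.
  - by rewrite !inE eqxx.
  - by rewrite disjointsU1 disj0 andbT ?inE ?aa1F ?aa1G ?aa2F ?aa2G ?abF ?abG ?ab1F ?ab1G ?ab2F ?ab2G ?a1a2F ?a1a2G ?a1bF ?a1bG ?a1b1F ?a1b1G ?a1b2F ?a1b2G ?a2bF ?a2bG ?a2b1F ?a2b1G ?a2b2F ?a2b2G ?bb1F ?bb1G ?bb2F ?bb2G ?b1b2F ?b1b2G ?xaF ?xaG ?xa1F ?xa1G ?xa2F ?xa2G.
  - by rewrite ?inE ?aa1F ?aa1G ?aa2F ?aa2G ?abF ?abG ?ab1F ?ab1G ?ab2F ?ab2G ?a1a2F ?a1a2G ?a1bF ?a1bG ?a1b1F ?a1b1G ?a1b2F ?a1b2G ?a2bF ?a2bG ?a2b1F ?a2b1G ?a2b2F ?a2b2G ?bb1F ?bb1G ?bb2F ?bb2G ?b1b2F ?b1b2G ?xaF ?xaG ?xa1F ?xa1G ?xa2F ?xa2G.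
  - by rewrite ?inE ?aa1F ?aa1G ?aa2F ?aa2G ?abF ?abG ?ab1F ?ab1G ?ab2F ?ab2G ?a1a2F ?a1a2G ?a1bF ?a1bG ?a1b1F ?a1b1G ?a1b2F ?a1b2G ?a2bF ?a2bG ?a2b1F ?a2b1G ?a2b2F ?a2b2G ?bb1F ?bb1G ?bb2F ?bb2G ?b1b2F ?b1b2G ?xaF ?xaG ?xa1F ?xa1G ?xa2F ?xa2G.
case Hc: #|T| H4 => [|k] // H4.
apply: (stepB (v := a)); first by rewrite !inE.
apply: (@S2 T e a a1 a2 Ha1 Ha2 a1a2); first by clear -H4; lia.
- by rewrite !inE eqxx.
- by rewrite disj0.
- by rewrite ?inE ?aa1F ?aa1G ?aa2F ?aa2G ?abF ?abG ?ab1F ?ab1G ?ab2F ?ab2G ?a1a2F ?a1a2G ?a1bF ?a1bG ?a1b1F ?a1b1G ?a1b2F ?a1b2G ?a2bF ?a2bG ?a2b1F ?a2b1G ?a2b2F ?a2b2G ?bb1F ?bb1G ?bb2F ?bb2G ?b1b2F ?b1b2G.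
- by rewrite ?inE ?aa1F ?aa1G ?aa2F ?aa2G ?abF ?abG ?ab1F ?ab1G ?ab2F ?ab2G ?a1a2F ?a1a2G ?a1bF ?a1bG ?a1b1F ?a1b1G ?a1b2F ?a1b2G ?a2bF ?a2bG ?a2b1F ?a2b1G ?a2b2F ?a2b2G ?bb1F ?bb1G ?bb2F ?bb2G ?b1b2F ?b1b2G.
Qed.

Lemma path_ball (T : finType) (e : rel T) x p : path e x p -> last x p \in ball e x (size p).
Proof.
elim: p x => [|y p IH] x /=; first by rewrite ball0.
move=> /andP [Hxy Hp]; have := ball_trans (ball_edge Hxy) (IH _ Hp); by rewrite add1n.
Qed.

Lemma reach_conn (T : finType) (e : rel T) : connected_graph e ->
  forall x y, exists2 n, n < #|T| & y \in ball e x n.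
Proof.
move=> Hc x y; have /connectP [p Hp ->] := Hc x y.
case: (shortenP Hp) => p' Hp' Hu _.
exists (size p'); last exact: path_ball.
have := max_card (mem (x :: p')); rewrite (card_uniqP Hu) /=; done.
Qed.

Lemma delta_ext (T : finType) (e : rel T) : 2 <= Delta_SR e ->
  exists g, exists g1, exists g2, [/\ g1 != g2, SR_edge e g g1 & SR_edge e g g2].
Proof.
move=> HD.
case: (boolP [exists x, SR_vertex e x && (1 < SR_deg e x)]) => [/existsP [x /andP [_ Hx]]|/existsPn Hn].
  move: Hx; rewrite /SR_deg => /card_gt1P [y1 [y2 [H1 H2 H12]]].
  by exists x, y1, y2; move: H1 H2; rewrite !inE => -> ->.
have : Delta_SR e <= 1.
  apply/bigmax_leqP => i Hi; have := Hn i; by rewrite Hi /= -leqNgt.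
by rewrite leqNgt HD.
Qed.

Lemma mmdC (T : finType) (e : rel T) u v : mmd e u v = mmd e v u.
Proof. by rewrite /mmd andbC. Qed.

Unset Implicit Arguments.
Theorem mainTheorem13 (T1 T2 : finType) (e1 : rel T1) (e2 : rel T2) :
  simple_graph e1 -> simple_graph e2 ->
  connected_graph e1 -> connected_graph e2 ->
  2 <= #|T1| -> 2 <= #|T2| ->
  (2 <= Delta_SR e1) || (2 <= Delta_SR e2) ->
  OSR_is_B (cart_rel e1 e2).
Proof.
move=> [s1 _] [s2 _] /reach_conn r1 /reach_conn r2 c1 c2.
have sP := symP s1 s2; have rr := rP r1 r2.
have blk : forall g g' h h', mmd e1 g g' -> mmd e2 h h' -> (g, h) != (g', h') ->
    blocks (cart_rel e1 e2) (g, h) (g', h').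
  move=> g g' h h' Hg Hh Hne S HS; exact: (mmd_block sP rr (mmdP r1 r2 Hg Hh) HS Hne).
case/orP => /delta_ext [g [g1 [g2 [H12 /andP [Hg1 M1] /andP [Hg2 M2]]]]].
  have [h [h' /andP [Hh Mh]]] := diam_pair s2 r2 c2.
  have F1 := negbTE H12; have F2 := negbTE Hg1; have F3 := negbTE Hg2; have F4 := negbTE Hh.
  have G1 := F1; have G2 := F2; have G3 := F3; have G4 := F4.
  rewrite eq_sym in G1; rewrite eq_sym in G2; rewrite eq_sym in G3; rewrite eq_sym in G4.
  apply: (@game _ _ (g, h) (g1, h') (g2, h') (g, h') (g1, h) (g2, h)).
  - by rewrite /= !inE !xpair_eqE ?F1 ?F2 ?F3 ?F4 ?G1 ?G2 ?G3 ?G4 ?eqxx ?andbF ?andbT.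
  - by apply: blk => //; rewrite xpair_eqE F2.
  - by apply: blk => //; rewrite xpair_eqE F3.
  - by apply: blk => //; [rewrite mmdC | rewrite xpair_eqE F2].
  - by apply: blk => //; [rewrite mmdC | rewrite xpair_eqE F3].
have [g' [g'' /andP [Hh Mh]]] := diam_pair s1 r1 c1.
have F1 := negbTE H12; have F2 := negbTE Hg1; have F3 := negbTE Hg2; have F4 := negbTE Hh.
have G1 := F1; have G2 := F2; have G3 := F3; have G4 := F4.
rewrite eq_sym in G1; rewrite eq_sym in G2; rewrite eq_sym in G3; rewrite eq_sym in G4.
apply: (@game _ _ (g', g) (g'', g1) (g'', g2) (g'', g) (g', g1) (g', g2)).
- by rewrite /= !inE !xpair_eqE ?F1 ?F2 ?F3 ?F4 ?G1 ?G2 ?G3 ?G4 ?eqxx ?andbF ?andbT.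
- by apply: blk => //; rewrite xpair_eqE F4.
- by apply: blk => //; rewrite xpair_eqE F4.
- by apply: blk => //; [rewrite mmdC | rewrite xpair_eqE G4].
- by apply: blk => //; [rewrite mmdC | rewrite xpair_eqE G4].
Qed.
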